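(* Let $P,Q$ be convex polygons in the plane, with all vertices in general position, that form a weakly disjoint pair and satisfy $P\cap Q\neq\emptyset$. Then one of $P,Q$ contains a vertex of the other.
   Context: Two convex polygons $P,Q$ form a weakly disjoint pair if $P\setminus Q$ and $Q\setminus P$ are both connected sets and $P$ and $Q$ share no vertex. The convex hull of a line segment is regarded as a valid degenerate convex polygon with two edges. *)

(* Defs.v *)
From HB Require Import structures.
From mathcomp Require Import all_boot all_order all_algebra.
From mathcomp Require Import all_classical all_reals topology normedtype.
Set Implicit Arguments. Unset Strict Implicit. Unset Printing Implicit Defensive.
Import Order.TTheory GRing.Theory Num.Theory.
Import numFieldNormedType.Exports.
Local Open Scope ring_scope.
Local Open Scope classical_set_scope.

Definition pt (R : realType) := (R * R)%type.

Definition hull (R : realType) (V : seq (pt R)) : set (pt R) :=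
  [set p | exists w : nat -> R,
      (forall i, 0 <= w i) /\
      \sum_(i < size V) w i = 1 /\
      p.1 = \sum_(i < size V) w i * (nth (0, 0) V i).1 /\
      p.2 = \sum_(i < size V) w i * (nth (0, 0) V i).2].

(* V is the (duplicate-free) vertex list of a convex polygon: at least two
   vertices (a segment is a degenerate polygon), each vertex is extreme,
   i.e. not in the convex hull of the other vertices.  The polygon itself
   is the closed region hull V. *)
Definition convex_polygon (R : realType) (V : seq (pt R)) : Prop :=
  (2 <= size V)%N /\ uniq V /\ forall v, v \in V -> ~ hull (rem v V) v.

Definition orient (R : realType) (a b c : pt R) : R :=
  (b.1 - a.1) * (c.2 - a.2) - (b.2 - a.2) * (c.1 - a.1).

Definition general_position (R : realType) (S : seq (pt R)) : Prop :=
  forall a b c, a \in S -> b \in S -> c \in S ->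
    a != b -> b != c -> a != c -> orient a b c != 0.

Definition weakly_disjoint (R : realType) (V W : seq (pt R)) : Prop :=
  connected (hull V `\` hull W) /\ connected (hull W `\` hull V) /\
  (forall v, v \in V -> v \notin W).

(* Main.v *)
Require Import Defs.
From HB Require Import structures.
From mathcomp Require Import all_boot all_order all_algebra.
From mathcomp Require Import all_classical all_reals topology normedtype.
From mathcomp Require Import ring lra.
Import Order.TTheory GRing.Theory Num.Theory.
Import numFieldNormedType.Exports.
Local Open Scope ring_scope.
Local Open Scope classical_set_scope.


Definition seg {R : realType} (a b x : pt R) : Prop :=
  exists t : R, 0 <= t <= 1 /\ x.1 = (1 - t) * a.1 + t * b.1 /\
                x.2 = (1 - t) * a.2 + t * b.2.

Lemma hull_seg {R : realType} (V : seq (pt R)) x y z :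
  hull V x -> hull V y -> seg x y z -> hull V z.
Proof.
move=> [wx [wx0 [sx [x1 x2]]]] [wy [wy0 [sy [y1 y2]]]] [t [/andP [t0 t1] [z1 z2]]].
exists (fun i => (1 - t) * wx i + t * wy i); split.
  move=> i; apply: addr_ge0; apply: mulr_ge0 => //; lra.
split; first by rewrite big_split /= -!mulr_sumr sx sy; ring.
split.
  rewrite z1 x1 y1 !mulr_sumr -big_split /=; apply: eq_bigr => i _; ring.
rewrite z2 x2 y2 !mulr_sumr -big_split /=; apply: eq_bigr => i _; ring.
Qed.

Lemma hull_mem {R : realType} (V : seq (pt R)) v : v \in V -> hull V v.
Proof.
move=> vV; have Hk : (index v V < size V)%N by rewrite index_mem.
have key : forall F : nat -> R,
  \sum_(i < size V) (if (i : nat) == index v V then 1 else 0) * F i = F (index v V).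
  move=> F; rewrite (bigD1 (Ordinal Hk)) //= eqxx mul1r big1 ?addr0 //.
  by move=> i /negP Hi; case: eqP => [Heq|]; [case: Hi; apply/eqP/val_inj|rewrite mul0r].
exists (fun i => if i == index v V then 1 else 0); split.
  by move=> i; case: eqP.
split.
  by rewrite -[RHS](key (fun _ => 1)); apply: eq_bigr => i _; rewrite mulr1.
have /= k1 := key (fun i => (nth (0,0) V i).1); have /= k2 := key (fun i => (nth (0,0) V i).2).
rewrite k1 k2.
by rewrite nth_index.
Qed.

Lemma hull_nil {R : realType} (p : pt R) : ~ hull [::] p.
Proof. by move=> [w [_ [s _]]]; move: s; rewrite big_ord0 => /eqP; rewrite eq_sym oner_eq0. Qed.

Lemma hull_cons_sub {R : realType} (a : pt R) W p : hull W p -> hull (a :: W) p.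
Proof.
move=> [w [w0 [s [p1 p2]]]].
exists (fun i => match i with 0%N => 0 | j.+1 => w j end); split.
  by case.
split; first by rewrite big_ord_recl /= add0r.
split; rewrite big_ord_recl /= mul0r add0r; [rewrite p1|rewrite p2]; by [].
Qed.


Lemma hull_cons_dec {R : realType} (a : pt R) W p : hull (a :: W) p ->
  (p.1 = a.1 /\ p.2 = a.2) \/ exists x, hull W x /\ seg a x p.
Proof.
move=> [w [w0 [s [p1 p2]]]].
move: s p1 p2; rewrite !big_ord_recl /=.
set S := \sum_(i < size W) w (lift ord0 i).
have S0 : 0 <= S by apply: sumr_ge0 => i _.
move=> s p1 p2.
have [SZ|SNZ] := eqVneq S 0.
  left.
  have Z : forall i : 'I_(size W), w (lift ord0 i) = 0.
    by move=> i; apply: (psumr_eq0P (fun i _ => w0 _) SZ).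
  have E : w (nat_of_ord (@ord0 (size W))) = 1 by rewrite -s SZ addr0.
  rewrite p1 p2 E !big1 ?addr0 ?mul1r //; by move=> i _; rewrite Z mul0r.
right.
have SP : 0 < S by rewrite lt_def SNZ S0.
have E : w (nat_of_ord (@ord0 (size W))) = 1 - S by rewrite -s; ring.
exists (\sum_(i < size W) w (lift ord0 i) / S * (nth (0,0) W i).1,
        \sum_(i < size W) w (lift ord0 i) / S * (nth (0,0) W i).2); split.
  exists (fun i => w i.+1 / S); split.
    by move=> i; apply: divr_ge0.
  split; last by [].
  by rewrite -mulr_suml /= -/S divff.
exists S; split; first by rewrite S0 /= -subr_ge0 -E.
rewrite p1 p2 E /= !mulr_sumr; split; congr (_ + _); apply: eq_bigr => i _;
  field; exact: SNZ.
Qed.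


Lemma min3 {R : realType} (x y z : R) : exists m, (m = x \/ m = y \/ m = z) /\
  m <= x /\ m <= y /\ m <= z.
Proof.
have [h1|h1] := lerP x y; have [h2|h2] := lerP x z; have [h3|h3] := lerP y z.
all: first [ (exists x; split; [left; done| lra]) |
             (exists y; split; [right; left; done| lra]) |
             (exists z; split; [right; right; done| lra]) ].
Qed.

Definition Tc {R : realType} (X X' : R) := if X' < 0 then X / (X - X') else 1.

Lemma Tc_range {R : realType} (X X' : R) : 0 <= X -> 0 <= Tc X X' <= 1.
Proof.
move=> X0; rewrite /Tc; case: ifP => h; last lra.
have P : 0 < X - X' by lra.
rewrite divr_ge0 /=; last lra; last lra.
by rewrite ler_pdivrMr // mul1r; lra.
Qed.

Lemma Tc_pos {R : realType} (X X' t : R) : 0 <= X -> 0 <= t <= 1 -> t <= Tc X X' ->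
  0 <= (1 - t) * X + t * X'.
Proof.
move=> X0 /andP [t0 t1]; rewrite /Tc; case: ifP => h; last nra.
have P : 0 < X - X' by lra.
by rewrite ler_pdivlMr //; nra.
Qed.

Lemma Tc_zero {R : realType} (X X' : R) : 0 <= X -> X' < 0 ->
  (1 - Tc X X') * X + Tc X X' * X' = 0.
Proof.
move=> X0 h; rewrite /Tc h.
have P : X - X' != 0 by rewrite subr_eq0; apply/eqP; lra.
by field.
Qed.

Lemma pick3 {R : realType} (A B C A' B' C' : R) : 0 <= A -> 0 <= B -> 0 <= C ->
  (A' < 0 \/ B' < 0 \/ C' < 0) -> exists t, 0 <= t <= 1 /\
  0 <= (1 - t) * A + t * A' /\ 0 <= (1 - t) * B + t * B' /\ 0 <= (1 - t) * C + t * C' /\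
  ((1 - t) * A + t * A' = 0 \/ (1 - t) * B + t * B' = 0 \/ (1 - t) * C + t * C' = 0).
Proof.
move=> A0 B0 C0 neg.
have [m [mE [ma [mb mc]]]] := min3 (Tc A A') (Tc B B') (Tc C C').
have ra := @Tc_range _ A A' A0; have rb := @Tc_range _ B B' B0; have rc := @Tc_range _ C C' C0.
have m01 : 0 <= m <= 1 by case: mE => [->|[->|->]].
exists m; split => //.
have pa := @Tc_pos _ A A' m A0 m01 ma; have pb := @Tc_pos _ B B' m B0 m01 mb; have pc := @Tc_pos _ C C' m C0 m01 mc.
do 3! (split => //).
case: mE => [E|[E|E]].
- case: (ltrP A' 0) => h; first by left; rewrite E Tc_zero.
  exfalso; move: E; rewrite /Tc ltNge h /= => E; rewrite E in pb pc; lra.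
- case: (ltrP B' 0) => h; first by right; left; rewrite E Tc_zero.
  exfalso; move: E; rewrite /Tc ltNge h /= => E; rewrite E in pa pc; lra.
- case: (ltrP C' 0) => h; first by right; right; rewrite E Tc_zero.
  exfalso; move: E; rewrite /Tc ltNge h /= => E; rewrite E in pa pb; lra.
Qed.


Lemma seg_trans {R : realType} (p q z r : pt R) : seg p q z -> seg z q r -> seg p q r.
Proof.
move=> [t [t01 [z1 z2]]] [u [u01 [r1 r2]]].
exists (t + u - t * u); split; first nra.
rewrite r1 r2 z1 z2; split; ring.
Qed.

Lemma seg_sym {R : realType} (a b x : pt R) : seg a b x -> seg b a x.
Proof. move=> [t [t01 [x1 x2]]]; exists (1 - t); split; first lra.
rewrite x1 x2; split; ring. Qed.

Lemma seg_l {R : realType} (a b : pt R) : seg a b a.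
Proof. exists 0; split; first lra. split; ring. Qed.

Lemma cevian {R : realType} (a x p q y : pt R) : seg a x p -> seg x q y ->
  exists z, seg p q z /\ seg a y z.
Proof.
move=> [s [/andP [s0 s1] [p1 p2]]] [u [/andP [u0 u1] [y1 y2]]].
have [DZ|DNZ] := eqVneq (1 - u + s * u) 0.
  have s00 : s = 0 by nra.
  exists a; split; last exact: seg_l.
  exists 0; split; first lra.
  by rewrite p1 p2 s00; split; ring.
have Dp : 0 < 1 - u + s * u by rewrite lt_def DNZ /=; nra.
set b := s / (1 - u + s * u).
have b0 : 0 <= b by apply: divr_ge0 => //; lra.
have b1 : b <= 1 by rewrite ler_pdivrMr // mul1r; nra.
exists ((1 - b) * a.1 + b * y.1, (1 - b) * a.2 + b * y.2); split.
  exists (b * u); split; first nra.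
  rewrite /= y1 y2 p1 p2 /b; split; field; exact: DNZ.
by exists b; split; first lra.
Qed.

Definition la {R : realType} (a b c x : pt R) := orient x b c / orient a b c.
Definition lb {R : realType} (a b c x : pt R) := orient a x c / orient a b c.
Definition lc {R : realType} (a b c x : pt R) := orient a b x / orient a b c.

Lemma l_sum {R : realType} (a b c x : pt R) : orient a b c != 0 ->
  la a b c x + lb a b c x + lc a b c x = 1.
Proof. move=> D; rewrite /la /lb /lc /orient; field; exact: D. Qed.

Lemma l_rec1 {R : realType} (a b c x : pt R) : orient a b c != 0 ->
  x.1 = la a b c x * a.1 + lb a b c x * b.1 + lc a b c x * c.1.
Proof. move=> D; rewrite /la /lb /lc; move: D; rewrite /orient => D; field; exact: D. Qed.

Lemma l_rec2 {R : realType} (a b c x : pt R) : orient a b c != 0 ->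
  x.2 = la a b c x * a.2 + lb a b c x * b.2 + lc a b c x * c.2.
Proof. move=> D; rewrite /la /lb /lc; move: D; rewrite /orient => D; field; exact: D. Qed.

Lemma tri_out {R : realType} (a b c q : pt R) : orient a b c != 0 ->
  0 <= la a b c q -> 0 <= lb a b c q -> 0 <= lc a b c q ->
  exists y', seg b c y' /\ seg a y' q.
Proof.
move=> D h1 h2 h3.
have S := l_sum a b c q D; have q1 := l_rec1 a b c q D; have q2 := l_rec2 a b c q D.
move: h1 h2 h3 S q1 q2.
set A := la a b c q; set B := lb a b c q; set C := lc a b c q => h1 h2 h3 S q1 q2.
have [BZ|BNZ] := eqVneq (B + C) 0.
  have B0 : B = 0 by lra.
  have C0 : C = 0 by lra.
  have A1 : A = 1 by lra.
  exists b; split; first exact: seg_l.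
  exists 0; split; first lra.
  by rewrite q1 q2 A1 B0 C0; split; ring.
have P : 0 < B + C by rewrite lt_def BNZ /=; lra.
exists ((B * b.1 + C * c.1) / (B + C), (B * b.2 + C * c.2) / (B + C)); split.
  exists (C / (B + C)); split.
    rewrite divr_ge0 //=; last lra. by rewrite ler_pdivrMr // mul1r; lra.
  by split => /=; field; exact: BNZ.
exists (B + C); split; first lra.
have A' : A = 1 - (B + C) by lra.
by rewrite q1 q2 A' /=; split; field; exact: BNZ.
Qed.

Lemma l_aff1 {R : realType} (a b c z q : pt R) t : orient a b c != 0 ->
  la a b c ((1 - t) * z.1 + t * q.1, (1 - t) * z.2 + t * q.2) =
  (1 - t) * la a b c z + t * la a b c q.
Proof. move=> D; rewrite /la /orient /=; field; exact: D. Qed.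
Lemma l_aff2 {R : realType} (a b c z q : pt R) t : orient a b c != 0 ->
  lb a b c ((1 - t) * z.1 + t * q.1, (1 - t) * z.2 + t * q.2) =
  (1 - t) * lb a b c z + t * lb a b c q.
Proof. move=> D; rewrite /lb /orient /=; field; exact: D. Qed.
Lemma l_aff3 {R : realType} (a b c z q : pt R) t : orient a b c != 0 ->
  lc a b c ((1 - t) * z.1 + t * q.1, (1 - t) * z.2 + t * q.2) =
  (1 - t) * lc a b c z + t * lc a b c q.
Proof. move=> D; rewrite /lc /orient /=; field; exact: D. Qed.

Lemma exit_tri {R : realType} (a b c y z q : pt R) : orient a b c != 0 ->
  seg b c y -> seg a y z -> ~ (exists y', seg b c y' /\ seg a y' q) ->
  exists r, seg z q r /\ (seg a b r \/ seg b c r \/ seg c a r).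
Proof.
move=> D [u [u01 [y1 y2]]] [t [t01 [z1 z2]]] nq.
have za : la a b c z = 1 - t.
  move: D; rewrite /la /orient z1 z2 y1 y2 => D; field; exact: D.
have zb : lb a b c z = t * (1 - u).
  move: D; rewrite /lb /orient z1 z2 y1 y2 => D; field; exact: D.
have zc : lc a b c z = t * u.
  move: D; rewrite /lc /orient z1 z2 y1 y2 => D; field; exact: D.
have neg : la a b c q < 0 \/ lb a b c q < 0 \/ lc a b c q < 0.
  case: (ltrP (la a b c q) 0) => h1; first by left.
  case: (ltrP (lb a b c q) 0) => h2; first by right; left.
  case: (ltrP (lc a b c q) 0) => h3; first by right; right.
  by exfalso; apply: nq; apply: tri_out.
have [m [m01 [pa [pb [pc zr]]]]] :=
  @pick3 _ (la a b c z) (lb a b c z) (lc a b c z) _ _ _ ltac:(rewrite za; lra)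
    ltac:(rewrite zb; nra) ltac:(rewrite zc; nra) neg.
pose r := ((1 - m) * z.1 + m * q.1, (1 - m) * z.2 + m * q.2).
have ra : la a b c r = (1 - m) * la a b c z + m * la a b c q := l_aff1 a b c z q m D.
have rb : lb a b c r = (1 - m) * lb a b c z + m * lb a b c q := l_aff2 a b c z q m D.
have rc : lc a b c r = (1 - m) * lc a b c z + m * lc a b c q := l_aff3 a b c z q m D.
have S := l_sum a b c r D; have r1 := l_rec1 a b c r D; have r2 := l_rec2 a b c r D.
exists r; split; first by exists m.
move: ra rb rc S r1 r2.
set A := la a b c r; set B := lb a b c r; set C := lc a b c r => ra rb rc S r1 r2.
case: zr => [Z|[Z|Z]].
- right; left; exists C; split; first lra.
  have A0 : A = 0 by lra.
  have B' : B = 1 - C by lra.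
  by rewrite r1 r2 A0 B'; split; ring.
- right; right; exists A; split; first lra.
  have B0 : B = 0 by lra.
  have C' : C = 1 - A by lra.
  by rewrite r1 r2 B0 C'; split; ring.
- left; exists B; split; first lra.
  have C0 : C = 0 by lra.
  have A' : A = 1 - B by lra.
  by rewrite r1 r2 C0 A'; split; ring.
Qed.


Lemma seg_pt {R : realType} (a b y z : pt R) : seg a y z -> seg b b y -> seg a b z.
Proof.
move=> [t [t01 [z1 z2]]] [u [u01 [y1 y2]]]; exists t; split => //.
by rewrite z1 z2 y1 y2; split; ring.
Qed.

Lemma exit_main {R : realType} (W : seq (pt R)) : uniq W -> general_position W ->
  forall p q, hull W p -> ~ hull W q ->
  exists wi wj z, wi \in W /\ wj \in W /\ seg p q z /\ seg wi wj z.
Proof.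
elim: W => [|a W IH] /=.
  by move=> _ _ p q /hull_nil.
move=> /andP [aW uW] gp p q hp hq.
have gpW : general_position W.
  move=> x y z xW yW zW; apply: gp; by rewrite inE ?xW ?yW ?zW orbT.
have [[p1 p2]|[x [hx spx]]] := hull_cons_dec _ _ _ hp.
  exists a, a, p; split; first exact: mem_head.
  split; first exact: mem_head.
  split; first exact: seg_l.
  by exists 0; split; [lra| rewrite p1 p2; split; ring].
have hqW : ~ hull W q by move=> h; apply: hq; apply: hull_cons_sub.
have [b [c [y [bW [cW [sxy sbc]]]]]] := IH uW gpW x q hx hqW.
have [z [spz sayz]] := cevian _ _ _ _ _ spx sxy.
have ab : a != b by apply/eqP => E; move: aW; rewrite E bW.
have ac : a != c by apply/eqP => E; move: aW; rewrite E cW.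
have aI : a \in a :: W by exact: mem_head.
have bI : b \in a :: W by rewrite inE bW orbT.
have cI : c \in a :: W by rewrite inE cW orbT.
have [E|bc] := eqVneq b c.
  rewrite -E in sbc.
  exists a, b, z; do 3! (split => //).
  exact: seg_pt _ _ _ _ sayz sbc.
have D : orient a b c != 0 by apply: gp.
have nq : ~ (exists y', seg b c y' /\ seg a y' q).
  move=> [y' [s1 s2]]; apply: hq.
  apply: hull_seg s2; first exact: hull_mem.
  apply: hull_seg s1; exact: hull_mem.
have [r [szr [H|[H|H]]]] := exit_tri _ _ _ _ _ _ D sbc sayz nq.
- by exists a, b, r; do 3! (split => //); apply: seg_trans _ _ _ _ spz szr.
- by exists b, c, r; do 3! (split => //); apply: seg_trans _ _ _ _ spz szr.
- by exists c, a, r; do 3! (split => //); apply: seg_trans _ _ _ _ spz szr.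
Qed.


Lemma line_param {R : realType} (a b x : pt R) : a != b -> orient a b x = 0 ->
  exists u, x.1 = a.1 + u * (b.1 - a.1) /\ x.2 = a.2 + u * (b.2 - a.2).
Proof.
case: a => a1 a2; case: b => b1 b2; case: x => x1 x2.
rewrite /orient /= xpair_eqE negb_and => /orP [h|h] O.
- have h' : b1 - a1 != 0 by rewrite subr_eq0 eq_sym.
  exists ((x1 - a1) / (b1 - a1)); split; first by field.
  have O2 : (b1 - a1) * (x2 - a2) = (b2 - a2) * (x1 - a1) by apply/eqP; rewrite -subr_eq0 O.
  have E : x2 = a2 + ((b1 - a1) * (x2 - a2)) / (b1 - a1) by field.
  by rewrite {1}E O2; field.
- have h' : b2 - a2 != 0 by rewrite subr_eq0 eq_sym.
  exists ((x2 - a2) / (b2 - a2)); split; last by field.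
  have O2 : (b2 - a2) * (x1 - a1) = (b1 - a1) * (x2 - a2).
    by apply/eqP; rewrite -subr_eq0 -oppr_eq0 opprB O.
  have E : x1 = a1 + ((b2 - a2) * (x1 - a1)) / (b2 - a2) by field.
  by rewrite {1}E O2; field.
Qed.

Lemma line_in_seg {R : realType} (V : seq (pt R)) (a b k x : pt R) : a != b ->
  ~ hull V a -> ~ hull V b -> seg a b k -> hull V k -> hull V x ->
  orient a b x = 0 -> seg a b x.
Proof.
move=> ab ha hb [s [/andP [s0 s1] [k1 k2]]] hk hx O.
have [u [x1 x2]] := line_param _ _ _ ab O.
case: (ltrP 1 u) => u1.
  exfalso; apply: hb; apply: (hull_seg _ _ _ _ hk hx).
  have us : u - s != 0 by apply/eqP; lra.
  exists ((1 - s) / (u - s)); split.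
    have P : 0 < u - s by lra.
    rewrite divr_ge0 /=; [|lra|lra]. by rewrite ler_pdivrMr // mul1r; lra.
  by rewrite k1 k2 x1 x2; split; field.
case: (ltrP u 0) => u0.
  exfalso; apply: ha; apply: (hull_seg _ _ _ _ hk hx).
  have us : s - u != 0 by apply/eqP; lra.
  exists (s / (s - u)); split.
    have P : 0 < s - u by lra.
    rewrite divr_ge0 /=; [|lra|lra]. by rewrite ler_pdivrMr // mul1r; lra.
  by rewrite k1 k2 x1 x2; split; field.
by exists u; split; [lra| rewrite x1 x2; split; ring].
Qed.

Lemma sign_lemma {R : realType} (V : seq (pt R)) (al be ga : R) k : hull V k ->
  al * k.1 + be * k.2 + ga = 0 ->
  (forall v, v \in V -> al * v.1 + be * v.2 + ga != 0) ->
  exists v, v \in V /\ al * v.1 + be * v.2 + ga < 0.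
Proof.
move=> [w [w0 [s [k1 k2]]]] gk nz.
have [//|N] := pselect (exists v, v \in V /\ al * v.1 + be * v.2 + ga < 0).
exfalso.
pose g i := al * (nth (0,0) V i).1 + be * (nth (0,0) V i).2 + ga.
have gpos : forall i : 'I_(size V), 0 < g i.
  move=> i; have iV : nth (0,0) V i \in V by apply: mem_nth.
  rewrite lt_def nz //=; rewrite leNgt; apply/negP => h; apply: N.
  by exists (nth (0,0) V i).
have sum0 : \sum_(i < size V) w i * g i = 0.
  rewrite -[RHS]gk k1 k2.
  transitivity (al * \sum_(i < size V) w i * (nth (0, 0) V i).1 +
     be * \sum_(i < size V) w i * (nth (0, 0) V i).2 + ga * \sum_(i < size V) w i);
    last by rewrite s mulr1.
  apply/esym; rewrite !mulr_sumr -big_split -big_split /=.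
  by apply: eq_bigr => i _; rewrite /g; ring.
have z := psumr_eq0P (fun (i : 'I_(size V)) _ => mulr_ge0 (w0 i) (ltW (gpos i))) sum0.
have : \sum_(i < size V) w i = 0.
  apply: big1 => i _; have := z i isT; move/eqP; rewrite mulf_eq0 => /orP [/eqP //|].
  by move/eqP => h; have := gpos i; rewrite h ltxx.
by rewrite s => /eqP; rewrite oner_eq0.
Qed.


Lemma orient_cont {R : realType} (a b : pt R) : continuous (fun x : pt R => orient a b x).
Proof.
move=> x; rewrite /orient.
apply: cvgB; apply: cvgMr; apply: cvgB; try apply: cvg_cst.
exact: cvg_snd. exact: cvg_fst.
Qed.

Lemma orient_aff {R : realType} (a b x : pt R) : orient a b x =
  (- (b.2 - a.2)) * x.1 + (b.1 - a.1) * x.2 + ((b.2 - a.2) * a.1 - (b.1 - a.1) * a.2).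
Proof. rewrite /orient; ring. Qed.

Theorem lemma3 (R : realType) (V W : seq (pt R)) :
  convex_polygon V -> convex_polygon W ->
  general_position (V ++ W) ->
  weakly_disjoint V W ->
  hull V `&` hull W !=set0 ->
  (exists2 v, v \in V & hull W v) \/ (exists2 w, w \in W & hull V w).
Proof.
move=> [V2 [uV _]] [W2 [uW _]] gp [cD1 [_ disj]] [p [pV pW]].
apply: contrapT => Hn.
have nV : forall v, v \in V -> ~ hull W v by move=> v vV h; apply: Hn; left; exists v.
have nW : forall w, w \in W -> ~ hull V w by move=> w wW h; apply: Hn; right; exists w.
have [v0 v0V] : exists v0, v0 \in V by case: V V2 {uV gp cD1 disj pV nV Hn nW} => [//|v0 ?] _; exists v0; exact: mem_head.
have gpW : general_position W.
  move=> x y z xW yW zW; apply: gp; by rewrite mem_cat ?xW ?yW ?zW orbT.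
have [wi [wj [k [wiW [wjW [spk swk]]]]]] := exit_main _ uW gpW p v0 pW (nV v0 v0V).
have hk : hull V k := hull_seg _ _ _ _ pV (hull_mem _ _ v0V) spk.
have wij : wi != wj.
  apply/eqP => E; rewrite -E in swk; apply: (nW wi wiW); apply: (hull_seg _ _ _ _ hk hk).
  move: swk => [t [_ [k1 k2]]]; exists 0; split; first lra.
  by rewrite k1 k2; split; ring.
have gk : orient wi wj k = 0.
  by move: swk => [t [_ [k1 k2]]]; rewrite /orient k1 k2; ring.
have nz : forall v, v \in V -> orient wi wj v != 0.
  move=> v vV; apply: gp.
  - by rewrite mem_cat wiW orbT.
  - by rewrite mem_cat wjW orbT.
  - by rewrite mem_cat vV.
  - exact: wij.
  - by apply/eqP => E; move: (disj v vV); rewrite -E wjW.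
  - by apply/eqP => E; move: (disj v vV); rewrite -E wiW.
have [vm [vmV vmneg]] : exists v, v \in V /\ orient wi wj v < 0.
  have := @sign_lemma _ V (- (wj.2 - wi.2)) (wj.1 - wi.1)
     ((wj.2 - wi.2) * wi.1 - (wj.1 - wi.1) * wi.2) k hk.
  rewrite -orient_aff => /(_ gk) [v vV|v [vV h]]; first by rewrite -orient_aff; apply: nz.
  by exists v; rewrite orient_aff.
have [vp [vpV vppos]] : exists v, v \in V /\ 0 < orient wi wj v.
  have := @sign_lemma _ V (- - (wj.2 - wi.2)) (- (wj.1 - wi.1))
     (- ((wj.2 - wi.2) * wi.1 - (wj.1 - wi.1) * wi.2)) k hk.
  have E : forall x : pt R, - - (wj.2 - wi.2) * x.1 + - (wj.1 - wi.1) * x.2 +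
     - ((wj.2 - wi.2) * wi.1 - (wj.1 - wi.1) * wi.2) = - orient wi wj x.
    by move=> x; rewrite orient_aff; ring.
  rewrite E gk oppr0 => /(_ erefl) [v vV|v [vV h]].
    by rewrite E oppr_eq0; apply: nz.
  by exists v; split => //; move: h; rewrite E oppr_lt0.
pose f := fun x : pt R => orient wi wj x.
have cf : connected (f @` (hull V `\` hull W)).
  apply: connected_continuous_connected cD1 _.
  by apply: continuous_subspaceT => x; apply: orient_cont.
move/connected_intervalP: cf => iv.
have Dm : (f @` (hull V `\` hull W)) (f vm).
  by exists vm => //; split; [apply: hull_mem|apply: nV].
have Dp : (f @` (hull V `\` hull W)) (f vp).
  by exists vp => //; split; [apply: hull_mem|apply: nV].
have H0 : f vm <= 0 <= f vp by rewrite /f; apply/andP; split; apply: ltW.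
have [x [hx nhx] fx0] := iv _ _ Dm Dp 0 H0.
apply: nhx.
have sx : seg wi wj x.
  by apply: (line_in_seg _ _ _ _ _ wij (nW wi wiW) (nW wj wjW) swk hk hx).
apply: (hull_seg _ _ _ _ (hull_mem _ _ wiW) (hull_mem _ _ wjW) sx).
Qed.
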